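(* Let $(X,d)$ be a metric space, $0<\rho<1$, and $\mu:X^k\to X$ a coordinatewise $\rho$-contractive $k$-mean. Then $\mu$ is weakly $\beta$-contractive.
   Context: A $k$-mean is a map $\mu:X^k\to X$ with $\mu(x,\ldots,x)=x$. It is coordinatewise $\rho$-contractive if $d(\mu(\mathbf{x}),\mu(\mathbf{y}))\le\rho\,d(x_j,y_j)$ whenever $\mathbf{x},\mathbf{y}\in X^k$ differ only in the $j$-th coordinate. The barycentric operator $\beta:X^{k+1}\to X^{k+1}$ is $\beta(\mathbf{x})_j=\mu(x_1,\ldots,x_{j-1},x_{j+1},\ldots,x_{k+1})$. For $\mathbf{x}\in X^{k+1}$, $\Delta(\mathbf{x})=\max_{i,j}d(x_i,x_j)$. $\mu$ is weakly $\beta$-contractive if $\lim_n\Delta(\beta^n(\mathbf{x}))=0$ for every $\mathbf{x}\in X^{k+1}$. *)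

(* Defs.v *)
From Stdlib Require Import Reals.
From mathcomp Require Import ssreflect ssrfun ssrbool eqtype ssrnat seq fintype bigop.

Set Implicit Arguments.
Unset Strict Implicit.
Unset Printing Implicit Defensive.

Local Open Scope R_scope.

Definition is_metric (X : Type) (d : X -> X -> R) : Prop :=
  (forall x y, 0 <= d x y) /\
  (forall x y, d x y = 0 <-> x = y) /\
  (forall x y, d x y = d y x) /\
  (forall x y z, d x z <= d x y + d y z).

Definition is_mean (X : Type) (k : nat) (mu : ('I_k -> X) -> X) : Prop :=
  forall x : X, mu (fun _ => x) = x.

Definition coord_contractive (X : Type) (d : X -> X -> R) (k : nat)
    (rho : R) (mu : ('I_k -> X) -> X) : Prop :=
  forall (x y : 'I_k -> X) (j : 'I_k),
    (forall i, i != j -> x i = y i) ->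
    d (mu x) (mu y) <= rho * d (x j) (y j).

(* Barycentric operator: beta(x)_j = mu(x with j-th coordinate removed).
   [lift j] enumerates the indices of 'I_k.+1 other than j, in increasing order. *)
Definition beta (X : Type) (k : nat) (mu : ('I_k -> X) -> X)
    (x : 'I_k.+1 -> X) : 'I_k.+1 -> X :=
  fun j => mu (fun i => x (lift j i)).

(* Delta(x) = max_{i,j} d(x_i, x_j)  (distances are >= 0, so 0 is a neutral base). *)
Definition Delta (X : Type) (d : X -> X -> R) (n : nat) (x : 'I_n -> X) : R :=
  \big[Rmax/0]_(i < n) \big[Rmax/0]_(j < n) d (x i) (x j).

Definition weakly_beta_contractive (X : Type) (d : X -> X -> R) (k : nat)
    (mu : ('I_k -> X) -> X) : Prop :=
  forall x : 'I_k.+1 -> X,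
    Un_cv (fun n => Delta d (iter n (beta mu) x)) 0.

(* Main.v *)
Require Import Defs.
From Stdlib Require Import Reals Lra.
From mathcomp Require Import ssreflect ssrfun ssrbool eqtype ssrnat seq fintype bigop.

Local Open Scope R_scope.

Lemma bigmax_ge (I : Type) (r : seq I) (F : I -> R) :
  0 <= \big[Rmax/0]_(i <- r) F i.
Proof.
elim: r => [|a r IH]; first by rewrite big_nil; lra.
rewrite big_cons; apply: Rle_trans IH (Rmax_r _ _).
Qed.

Lemma bigmax_in (I : eqType) (r : seq I) (F : I -> R) (i : I) :
  i \in r -> F i <= \big[Rmax/0]_(j <- r) F j.
Proof.
elim: r => [|a r IH] //; rewrite in_cons big_cons => /orP [/eqP -> | H].
  exact: Rmax_l.
apply: Rle_trans (IH H) (Rmax_r _ _).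
Qed.

Lemma bigmax_le (I : Type) (r : seq I) (F : I -> R) (c : R) :
  0 <= c -> (forall i, F i <= c) -> \big[Rmax/0]_(j <- r) F j <= c.
Proof.
move=> c0 H; elim: r => [|a r IH]; first by rewrite big_nil.
rewrite big_cons; exact: Rmax_lub.
Qed.

Lemma Delta_ge0 X (d : X -> X -> R) n (x : 'I_n -> X) : 0 <= Defs.Delta d x.
Proof. rewrite /Defs.Delta; exact: bigmax_ge. Qed.

Lemma Delta_in X (d : X -> X -> R) n (x : 'I_n -> X) i j :
  d (x i) (x j) <= Defs.Delta d x.
Proof.
rewrite /Defs.Delta.
apply: Rle_trans (@bigmax_in _ _ (fun i => \big[Rmax/0]_(j < n) d (x i) (x j)) i (mem_index_enum i)).
exact: (@bigmax_in _ _ (fun j => d (x i) (x j)) j (mem_index_enum j)).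
Qed.

Lemma Delta_le X (d : X -> X -> R) n (x : 'I_n -> X) c :
  0 <= c -> (forall i j, d (x i) (x j) <= c) -> Defs.Delta d x <= c.
Proof.
move=> c0 H; apply: bigmax_le => // i; apply: bigmax_le => // j; exact: H.
Qed.

Lemma key X (d : X -> X -> R) k rho (mu : ('I_k -> X) -> X) (z : 'I_k.+1 -> X) j :
  is_metric d -> coord_contractive d rho mu -> (j < k)%N ->
  d (beta mu z (inord j)) (beta mu z (inord j.+1)) <= rho * d (z (inord j)) (z (inord j.+1)).
Proof.
move=> [_ [_ [dsym _]]] Hc hj.
rewrite /beta.
have Hk0 : (j < k.+1)%N by apply: leq_trans hj _.
have Hk1 : (j < k.+1)%N by apply: leq_trans hj _.
have Hk2 : (j.+1 < k.+1)%N by [].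
have := Hc (fun i => z (lift (inord j) i)) (fun i => z (lift (inord j.+1) i)) (Ordinal hj).
have -> : lift (inord j) (Ordinal hj) = inord j.+1 :> 'I_k.+1.
  by apply: val_inj; rewrite /= /bump !inordK // leqnn add1n.
have -> : lift (inord j.+1) (Ordinal hj) = inord j :> 'I_k.+1.
  by apply: val_inj; rewrite /= /bump !inordK // ltnn add0n.
move=> H; rewrite (dsym (z (inord j))); apply: H => i Hi; congr z; apply: val_inj; rewrite /= /bump !inordK //.
have : (val i != j) by apply/eqP => E; move/eqP: Hi; apply; apply: val_inj.
by case: (ltngtP j i) => [H1|H1|H1] _ //.
Qed.

Lemma chain X (d : X -> X -> R) k (y : 'I_k.+1 -> X) B :
  is_metric d -> 0 <= B ->
  (forall j, (j < k)%N -> d (y (inord j)) (y (inord j.+1)) <= B) ->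
  forall m a, (a + m <= k)%N -> d (y (inord a)) (y (inord (a + m))) <= INR m * B.
Proof.
move=> [d0 [dz [dsym dtri]]] B0 H; elim=> [|m IH] a ham.
  rewrite addn0 (proj2 (dz _ _) erefl) /=; lra.
rewrite S_INR addnS.
apply: Rle_trans (dtri _ (y (inord (a + m))) _) _.
have h2 : (a + m <= k)%N by apply: leq_trans ham; rewrite leq_add2l.
have h1 : (a + m < k)%N by rewrite -addnS.
have := IH a h2; have := H _ h1; lra.
Qed.

Theorem lemma3p8 (X : Type) (d : X -> X -> R) (k : nat) (rho : R)
    (mu : ('I_k -> X) -> X) :
  is_metric d ->
  (0 < rho < 1)%R ->
  is_mean mu ->
  coord_contractive d rho mu ->
  weakly_beta_contractive d mu.
Proof.
move=> Hm [r0 r1] _ Hc x.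
have [d0 [dz [dsym dtri]]] := Hm.
set D0 := Defs.Delta d x.
have D0p : 0 <= D0 by apply: Delta_ge0.
set xs := fun n => iter n (beta mu) x.
have adj : forall n j, (j < k)%N -> d (xs n (inord j)) (xs n (inord j.+1)) <= rho^n * D0.
  elim=> [|n IH] j hj.
    rewrite /= Rmult_1_l; exact: Delta_in.
  rewrite /xs iterS; apply: Rle_trans (key _ _ _ _ _ _ _ Hm Hc hj) _.
  rewrite /= Rmult_assoc; apply: Rmult_le_compat_l; [lra | exact: IH].
have bnd : forall n, Defs.Delta d (xs n) <= INR k * (rho^n * D0).
  move=> n.
  have Bp : 0 <= rho ^ n * D0 by apply: Rmult_le_pos => //; apply: pow_le; lra.
  apply: Delta_le; first by apply: Rmult_le_pos => //; apply: pos_INR.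
  have main : forall i j : 'I_k.+1, (i <= j)%N -> d (xs n i) (xs n j) <= INR k * (rho ^ n * D0).
    move=> i j hij.
    have hle : (i + (j - i) <= k)%N by rewrite subnKC // -ltnS.
    have := chain _ _ _ (xs n) _ Hm Bp (adj n) _ _ hle.
    rewrite subnKC // !inord_val => h; apply: Rle_trans h _.
    apply: Rmult_le_compat_r => //; apply: le_INR; apply/leP.
    apply: leq_trans (leq_subr _ _) _; by rewrite -ltnS.
  move=> i j; case: (leqP i j) => hij; first exact: main.
  rewrite dsym; apply: main; exact: ltnW.
move=> eps He.
set C := INR k * D0.
have Cp : 0 <= C by apply: Rmult_le_pos => //; apply: pos_INR.
have Hy : 0 < eps / (C + 1) by apply: Rdiv_lt_0_compat; lra.
have Hr : Rabs rho < 1 by rewrite Rabs_pos_eq; lra.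
have [N HN] := pow_lt_1_zero rho Hr _ Hy.
exists N => n hn.
have := HN n hn; rewrite Rabs_pos_eq; last by apply: pow_le; lra.
move=> h.
have h' : (C + 1) * rho ^ n < eps.
  have := Rmult_lt_compat_l (C + 1) _ _ (ltac:(lra) : 0 < C + 1) h.
  have e : (C + 1) * (eps / (C + 1)) = eps by field; lra.
  lra.
have hp : 0 <= rho ^ n by apply: pow_le; lra.
rewrite /R_dist Rminus_0_r Rabs_pos_eq; last exact: Delta_ge0.
apply: Rle_lt_trans (bnd n) _.
have : INR k * (rho ^ n * D0) = C * rho ^ n by rewrite /C; ring.
move=> ->; nra.
Qed.
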